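(* For every $k\in\mathbb{R}\setminus\{0\}$ and every $x\ge L_k$, $$\operatorname{sign}\big[(H_k'(x))^2-H_k(x)H_k''(x)\big]=\operatorname{sign}(k).$$ Consequently, $q\mapsto \operatorname{sign}(k)\,H_k'(q)/H_k(q)=|H_k'(q)/H_k(q)|$ is positive and decreasing on $(R_k,\infty)$.
   Context: For real $k$, the Hermite function $H_k:\mathbb{R}\to\mathbb{R}$ is the (unique) solution of $H_k''(x)-xH_k'(x)+kH_k(x)=0$ with $H_k(x)=x^k+o(x^k)$ as $x\to+\infty$. $L_k$ is the leftmost real zero of $H_k$ if $k>0$ and $L_k=-\infty$ if $k\le 0$; $R_k$ is the rightmost real zero of $H_k$ if $k>0$ and $R_k=-\infty$ if $k\le 0$. *)

(* Defs.v *)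
From Stdlib Require Import Reals Lra.
Open Scope R_scope.

Definition is_hermite (k : R) (H H1 H2 : R -> R) : Prop :=
  (forall x, derivable_pt_lim H x (H1 x)) /\
  (forall x, derivable_pt_lim H1 x (H2 x)) /\
  (forall x, H2 x - x * H1 x + k * H x = 0) /\
  (forall eps, 0 < eps -> exists M, forall x, M < x -> 0 < x ->
      Rabs (H x - Rpower x k) <= eps * Rpower x k).

Definition is_leftmost_zero (H : R -> R) (L : R) : Prop :=
  H L = 0 /\ forall z, H z = 0 -> L <= z.

Definition is_rightmost_zero (H : R -> R) (Rz : R) : Prop :=
  H Rz = 0 /\ forall z, H z = 0 -> z <= Rz.

(* x >= L_k, where L_k = -infinity if k <= 0 *)
Definition ge_L (k : R) (H : R -> R) (x : R) : Prop :=
  k <= 0 \/ exists L, is_leftmost_zero H L /\ L <= x.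

(* x > R_k, where R_k = -infinity if k <= 0 *)
Definition gt_R (k : R) (H : R -> R) (x : R) : Prop :=
  k <= 0 \/ exists Rz, is_rightmost_zero H Rz /\ Rz < x.

Definition sgn (x : R) : R :=
  if Rlt_dec 0 x then 1 else if Rlt_dec x 0 then -1 else 0.

(* Main.v *)
Require Import Defs.
From Stdlib Require Import Reals Lra Psatz Classical.
From Coquelicot Require Import Coquelicot.
Open Scope R_scope.

Lemma cont_pos f x : continuity_pt f x -> 0 < f x ->
  exists d, 0 < d /\ forall y, Rabs (y - x) < d -> 0 < f y.
Proof.
intros hc hp. destruct (hc (f x / 2)) as (d & hd & hd2). lra.
exists d. split; auto. intros y hy.
destruct (Req_dec y x) as [->|hne]; auto.
assert (h := hd2 y (conj (conj I (not_eq_sym hne)) hy)). simpl in h. unfold R_dist in h.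
apply Rabs_def2 in h. lra.
Qed.

Lemma cont_neg f x : continuity_pt f x -> f x < 0 ->
  exists d, 0 < d /\ forall y, Rabs (y - x) < d -> f y < 0.
Proof.
intros hc hp. destruct (cont_pos (-f)%F x) as (d&hd&h).
now apply continuity_pt_opp. unfold opp_fct; lra.
exists d; split; auto. intros y hy; specialize (h y hy); unfold opp_fct in h; lra.
Qed.

Lemma deriv_neg f x l : derivable_pt_lim f x l -> l < 0 ->
  exists d, 0 < d /\ forall h, 0 < h < d -> f (x + h) < f x /\ f x < f (x - h).
Proof.
intros hd hl. destruct (hd (-l/2)) as (d & hdd). lra.
exists d. split. apply cond_pos. intros h hh.
assert (h1 := hdd h ltac:(lra) ltac:(rewrite Rabs_right; lra)).
assert (h2 := hdd (-h) ltac:(lra) ltac:(rewrite Rabs_left; lra)).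
apply Rabs_def2 in h1. apply Rabs_def2 in h2.
set (q1 := (f (x + h) - f x) / h) in *.
set (q2 := (f (x + - h) - f x) / - h) in *.
assert (e1 : f (x + h) - f x = q1 * h) by (unfold q1; field; lra).
assert (e2 : f (x + - h) - f x = q2 * - h) by (unfold q2; field; lra).
replace (x - h) with (x + - h) by ring.
split; nra.
Qed.

Lemma deriv_pos f x l : derivable_pt_lim f x l -> 0 < l ->
  exists d, 0 < d /\ forall h, 0 < h < d -> f x < f (x + h) /\ f (x - h) < f x.
Proof.
intros hd hl. destruct (deriv_neg (-f)%F x (-l)) as (d&hd'&h).
now apply derivable_pt_lim_opp. lra.
exists d; split; auto. intros h0 hh; specialize (h h0 hh); unfold opp_fct in h; lra.
Qed.

Lemma first_zero f a b : continuity f -> a < b -> f a < 0 -> 0 <= f b ->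
  exists t, a < t <= b /\ f t = 0 /\ forall y, a <= y < t -> f y < 0.
Proof.
intros hc hab ha hb.
set (E := fun y => a <= y /\ forall z, a <= z <= y -> f z < 0).
assert (Ea : E a). { split. lra. intros z hz. replace z with a by lra. auto. }
assert (bE : bound E). { exists b. intros y [hy1 hy2]. destruct (Rle_lt_dec y b); auto.
  specialize (hy2 b ltac:(lra)). lra. }
destruct (completeness E bE (ex_intro _ a Ea)) as [t [ht1 ht2]].
assert (hat : a <= t) by (apply ht1; auto).
assert (hbel : forall y, a <= y < t -> f y < 0).
{ intros y hy. destruct (classic (exists y', E y' /\ y < y')) as [[y' [[_ hy'] hyy']]|hn].
  - apply hy'; lra.
  - exfalso. assert (t <= y). apply ht2. intros z hz. destruct (Rle_lt_dec z y); auto.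
    exfalso; apply hn; eauto. lra. }
assert (htb : t <= b). { apply ht2. intros y [hy1 hy2]. destruct (Rle_lt_dec y b); auto.
  specialize (hy2 b ltac:(lra)). lra. }
destruct (Rtotal_order (f t) 0) as [hn|[h0|hp]].
- exfalso. destruct (cont_neg f t (hc t) hn) as (d&hd&hdd).
  assert (E (t + d/2)). { split. lra. intros z hz. destruct (Rlt_le_dec z t).
    apply hbel; lra. apply hdd. rewrite Rabs_right; lra. }
  assert (t + d/2 <= t) by (apply ht1; auto). lra.
- exists t. split; [|split; auto]. split; auto. destruct (Req_dec a t) as [<-|]; lra.
- exfalso. destruct (cont_pos f t (hc t) hp) as (d&hd&hdd).
  destruct (Req_dec a t) as [<-|hne]. lra.
  set (y := Rmax a (t - d/2)).
  assert (a <= y < t). { unfold y. apply Rmax_case_strong; lra. }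
  assert (Rabs (y - t) < d). { unfold y. rewrite Rabs_left. apply Rmax_case_strong; lra.
     apply Rmax_case_strong; lra. }
  specialize (hbel y H). specialize (hdd y H0). lra.
Qed.

Lemma cont_refl f : continuity f -> continuity (fun y => f (- y)).
Proof. intros hc x. apply (continuity_pt_comp (fun y => - y) f).
  apply (continuity_opp id (derivable_continuous _ derivable_id)). apply hc. Qed.

Lemma last_zero f a b : continuity f -> a < b -> 0 <= f a -> f b < 0 ->
  exists r, a <= r < b /\ f r = 0 /\ forall y, r < y <= b -> f y < 0.
Proof.
intros hc hab ha hb.
destruct (first_zero (fun y => f (- y)) (-b) (-a)) as (t & ht & h0 & hl).
apply cont_refl; auto. lra. rewrite Ropp_involutive; auto. rewrite Ropp_involutive; auto.
exists (-t). split. lra. split. auto. intros y hy. replace y with (- - y) by ring. apply hl. lra.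
Qed.

Lemma first_zero' f a b : continuity f -> a < b -> 0 < f a -> f b <= 0 ->
  exists t, a < t <= b /\ f t = 0 /\ forall y, a <= y < t -> 0 < f y.
Proof.
intros hc hab ha hb. destruct (first_zero (-f)%F a b) as (t&ht&h0&hl).
now apply continuity_opp. lra. unfold opp_fct; lra. unfold opp_fct; lra.
exists t. unfold opp_fct in *. split; auto. split. lra. intros y hy; specialize (hl y hy); lra.
Qed.

Lemma last_zero' f a b : continuity f -> a < b -> f a <= 0 -> 0 < f b ->
  exists r, a <= r < b /\ f r = 0 /\ forall y, r < y <= b -> 0 < f y.
Proof.
intros hc hab ha hb. destruct (last_zero (-f)%F a b) as (t&ht&h0&hl).
now apply continuity_opp. lra. unfold opp_fct; lra. unfold opp_fct; lra.
exists t. unfold opp_fct in *. split; auto. split. lra. intros y hy; specialize (hl y hy); lra.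
Qed.

Lemma sup_zero f B : continuity f -> (exists z, f z = 0) -> (forall x, f x = 0 -> x <= B) ->
  exists z, f z = 0 /\ forall x, f x = 0 -> x <= z.
Proof.
intros hc [z0 hz0] hB.
destruct (completeness (fun x => f x = 0)) as [z [hz1 hz2]].
exists B. intros x hx; auto. eauto.
exists z. split; auto.
destruct (Req_dec (f z) 0) as [|hne]; auto. exfalso.
assert (exists d, 0 < d /\ forall y, Rabs (y - z) < d -> f y <> 0) as (d&hd&hdd).
{ destruct (Rlt_le_dec 0 (f z)).
  destruct (cont_pos f z (hc z)) as (d&?&?); auto. exists d; split; auto. intros y hy; specialize (H0 y hy); lra.
  destruct (cont_neg f z (hc z)) as (d&?&?); auto. lra. exists d; split; auto. intros y hy; specialize (H0 y hy); lra. }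
assert (z <= z - d/2). apply hz2. intros x hx. destruct (Rle_lt_dec x (z - d/2)); auto.
assert (x <= z) by (apply hz1; auto). exfalso. apply (hdd x); auto. rewrite Rabs_left1; lra.
lra.
Qed.

Lemma inf_zero f B : continuity f -> (exists z, f z = 0) -> (forall x, f x = 0 -> B <= x) ->
  exists z, f z = 0 /\ forall x, f x = 0 -> z <= x.
Proof.
intros hc [z0 hz0] hB.
destruct (sup_zero (fun y => f (- y)) (-B)) as (z & hz & hzz).
apply cont_refl; auto. exists (-z0). rewrite Ropp_involutive; auto.
intros x hx. specialize (hB _ hx). lra.
exists (-z). split; auto. intros x hx. assert (-x <= z). apply hzz. rewrite Ropp_involutive; auto. lra.
Qed.

Lemma Rabs_def2b a b : Rabs a <= b -> - b <= a <= b.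
Proof. intros h. destruct (Rcase_abs a); [rewrite Rabs_left in h | rewrite Rabs_right in h]; lra. Qed.

Definition Wf (k : R) (H H1 : R -> R) (x : R) := H1 x ^ 2 - x * H x * H1 x + k * H x ^ 2.
Definition uf (H H1 : R -> R) (x : R) := H1 x / H x.

Lemma W_eq k H H1 H2 x : is_hermite k H H1 H2 -> H1 x ^ 2 - H x * H2 x = Wf k H H1 x.
Proof. intros (_&_&hO&_). unfold Wf. specialize (hO x).
replace (H2 x) with (x * H1 x - k * H x) by lra. ring. Qed.

Lemma DH k H H1 H2 x : is_hermite k H H1 H2 -> Derive (fun y => H y) x = H1 x.
Proof. intros (hD&_). apply is_derive_unique. apply is_derive_Reals. apply hD. Qed.
Lemma DH1 k H H1 H2 x : is_hermite k H H1 H2 -> Derive (fun y => H1 y) x = x * H1 x - k * H x.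
Proof. intros (_&hD&hO&_). apply is_derive_unique. apply is_derive_Reals.
replace (x * H1 x - k * H x) with (H2 x) by (specialize (hO x); lra). apply hD. Qed.
Lemma exH k H H1 H2 x : is_hermite k H H1 H2 -> ex_derive (fun y => H y) x.
Proof. intros (hD&_). exists (H1 x). apply is_derive_Reals. apply hD. Qed.
Lemma exH1 k H H1 H2 x : is_hermite k H H1 H2 -> ex_derive (fun y => H1 y) x.
Proof. intros (_&hD&_). exists (H2 x). apply is_derive_Reals. apply hD. Qed.

Ltac hder hH := auto_derive; [repeat split; first [assumption | apply (exH _ _ _ _ _ hH) | apply (exH1 _ _ _ _ _ hH)] |
   rewrite ?(DH _ _ _ _ _ hH), ?(DH1 _ _ _ _ _ hH)].

Lemma D_W k H H1 H2 x : is_hermite k H H1 H2 ->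
  derivable_pt_lim (Wf k H H1) x (x * Wf k H H1 x - H x * H1 x).
Proof. intros hH. apply is_derive_Reals. unfold Wf. hder hH. ring. Qed.

Lemma D_u k H H1 H2 x : is_hermite k H H1 H2 -> H x <> 0 ->
  derivable_pt_lim (uf H H1) x (- Wf k H H1 x / (H x)^2).
Proof. intros hH hx. apply is_derive_Reals. unfold uf, Wf. hder hH. field. auto. Qed.
Lemma cont_H k H H1 H2 : is_hermite k H H1 H2 -> continuity H.
Proof. intros hH x. apply derivable_continuous_pt. exists (H1 x). apply hH. Qed.
Lemma cont_W k H H1 H2 : is_hermite k H H1 H2 -> continuity (Wf k H H1).
Proof. intros hH x. apply derivable_continuous_pt. eexists. apply (D_W _ _ _ H2); auto. Qed.

Lemma asym k H H1 H2 : is_hermite k H H1 H2 -> exists M, 0 <= M /\ forall x, M < x ->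
  0 < H x /\ ln (1/2) + k * ln x <= ln (H x) /\ ln (H x) <= ln (3/2) + k * ln x.
Proof.
intros (_&_&_&hA). destruct (hA (1/2) ltac:(lra)) as (M0 & hM0).
exists (Rmax M0 0). split. apply Rmax_r. intros x hx.
assert (x > M0) by (eapply Rle_lt_trans; [apply Rmax_l|eauto]).
assert (x > 0) by (eapply Rle_lt_trans; [apply Rmax_r|eauto]).
specialize (hM0 x H0 H3). unfold Rpower in hM0. set (R := exp (k * ln x)) in *.
assert (0 < R) by apply exp_pos. apply Rabs_def2b in hM0.
assert (hR : ln R = k * ln x) by apply ln_exp.
split. lra. split.
- rewrite <- hR, <- ln_mult by lra. apply ln_le; nra.
- rewrite <- hR, <- ln_mult by lra. apply ln_le; nra.
Qed.

Lemma uniq k H H1 H2 z : is_hermite k H H1 H2 -> H z = 0 -> H1 z = 0 -> forall x, H x = 0.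
Proof.
intros hH h0 h1 x.
set (B := Rmax (Rabs x) (Rabs z)). set (C := Rabs (1 - k) + 2 * B).
assert (hB : forall t, Rmin x z <= t <= Rmax x z -> Rabs t <= B).
{ intros t ht. unfold B. apply Rabs_le.
  assert (Rabs x <= Rmax (Rabs x) (Rabs z)) by apply Rmax_l.
  assert (Rabs z <= Rmax (Rabs x) (Rabs z)) by apply Rmax_r.
  assert (x <= Rabs x) by apply Rle_abs. assert (-x <= Rabs x) by (rewrite <- Rabs_Ropp; apply Rle_abs).
  assert (z <= Rabs z) by apply Rle_abs. assert (-z <= Rabs z) by (rewrite <- Rabs_Ropp; apply Rle_abs).
  revert ht. unfold Rmin, Rmax at 1 2. repeat destruct Rle_dec; intros; lra. }
assert (hE : forall t, Rmin x z <= t <= Rmax x z ->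
   Rabs (2 * H t * H1 t + 2 * H1 t * (t * H1 t - k * H t)) <= C * (H t ^ 2 + H1 t ^ 2)).
{ intros t ht. specialize (hB t ht). unfold C.
  assert (Rabs t <= B) by auto.
  assert (e : 2 * H t * H1 t + 2 * H1 t * (t * H1 t - k * H t) = 2 * (1 - k) * (H t * H1 t) + 2 * t * H1 t ^ 2) by ring.
  rewrite e. eapply Rle_trans. apply Rabs_triang. rewrite !Rabs_mult.
  rewrite (Rabs_right 2) by lra. rewrite (Rabs_right (H1 t ^2)) by (apply Rle_ge; nra).
  assert (2 * Rabs (H t) * Rabs (H1 t) <= H t ^ 2 + H1 t ^ 2).
  { assert (Rabs (H t) * Rabs (H t) = H t * H t) by (rewrite <- Rabs_mult; apply Rabs_right; nra).
    assert (Rabs (H1 t) * Rabs (H1 t) = H1 t * H1 t) by (rewrite <- Rabs_mult; apply Rabs_right; nra).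
    assert (0 <= (Rabs (H t) - Rabs (H1 t))^2) by apply pow2_ge_0. nra. }
  assert (0 <= Rabs (1 - k)) by apply Rabs_pos. assert (0 <= Rabs (H t)) by apply Rabs_pos.
  assert (0 <= Rabs (H1 t)) by apply Rabs_pos.
  assert (Rabs (1 - k) * (2 * Rabs (H t) * Rabs (H1 t)) <= Rabs (1 - k) * (H t ^ 2 + H1 t ^ 2)) by (apply Rmult_le_compat_l; auto).
  assert (Rabs t * H1 t ^ 2 <= B * (H t ^ 2 + H1 t ^ 2)).
  { apply Rmult_le_compat; try nra. apply Rabs_pos. }
  nra. }
set (E := fun t => H t ^ 2 + H1 t ^ 2).
assert (E x = 0).
2:{ unfold E in H0. nra. }
assert (hEz : E z = 0) by (unfold E; rewrite h0, h1; ring).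
assert (hEx : E x >= 0) by (unfold E; nra).
destruct (Rtotal_order x z) as [hlt|[heq|hgt]].
- (* f t = E t * exp (C t), f' >= 0 *)
  destruct (MVT_cor2 (fun t => E t * exp (C * t))
    (fun t => (2 * H t * H1 t + 2 * H1 t * (t * H1 t - k * H t) + C * E t) * exp (C * t)) x z hlt)
    as (c & hc & hcx).
  { intros c hc. apply is_derive_Reals. unfold E. hder hH. ring. }
  assert (hh := hE c ltac:(unfold Rmin, Rmax; repeat destruct Rle_dec; lra)).
  apply Rabs_def2b in hh. fold (E c) in hh.
  assert (0 < exp (C * c)) by apply exp_pos. assert (0 < exp (C * x)) by apply exp_pos.
  rewrite hEz in hc.
  assert (0 <= (2 * H c * H1 c + 2 * H1 c * (c * H1 c - k * H c) + C * E c) * exp (C * c) * (z - x)).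
  { apply Rmult_le_pos; [apply Rmult_le_pos|]; lra. }
  nra.
- subst; auto.
- destruct (MVT_cor2 (fun t => E t * exp (- C * t))
    (fun t => (2 * H t * H1 t + 2 * H1 t * (t * H1 t - k * H t) - C * E t) * exp (- C * t)) z x hgt)
    as (c & hc & hcx).
  { intros c hc. apply is_derive_Reals. unfold E. hder hH. ring. }
  assert (hh := hE c ltac:(unfold Rmin, Rmax; repeat destruct Rle_dec; lra)).
  apply Rabs_def2b in hh. fold (E c) in hh.
  assert (0 < exp (- C * c)) by apply exp_pos. assert (0 < exp (- C * x)) by apply exp_pos.
  rewrite hEz in hc.
  assert (0 <= - (2 * H c * H1 c + 2 * H1 c * (c * H1 c - k * H c) - C * E c) * exp (- C * c) * (x - z)).
  { apply Rmult_le_pos; [apply Rmult_le_pos|]; lra. }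
  nra.
Qed.

Lemma no_double k H H1 H2 z : is_hermite k H H1 H2 -> H z = 0 -> H1 z <> 0.
Proof. intros hH h0 h1. destruct (asym _ _ _ _ hH) as (M&hM&hA).
destruct (hA (M+1) ltac:(lra)) as (hp&_). rewrite (uniq _ _ _ _ z hH h0 h1 (M+1)) in hp. lra. Qed.

Lemma D_lnH k H H1 H2 x : is_hermite k H H1 H2 -> 0 < H x ->
  derivable_pt_lim (fun t => ln (H t)) x (uf H H1 x).
Proof. intros hH hx. apply is_derive_Reals. unfold uf. hder hH. field. lra. Qed.

Lemma growth_ge k H H1 H2 s x y : is_hermite k H H1 H2 -> x < y ->
  (forall t, x <= t <= y -> 0 < H t) -> (forall t, x <= t <= y -> s <= uf H H1 t) ->
  s * (y - x) <= ln (H y) - ln (H x).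
Proof. intros hH hxy hp hs.
destruct (MVT_cor2 (fun t => ln (H t)) (uf H H1) x y hxy) as (c&hc&hc2).
intros c hc; apply (D_lnH k _ _ H2); auto.
rewrite hc. apply Rmult_le_compat_r. lra. apply hs; lra. Qed.

Lemma growth_le k H H1 H2 s x y : is_hermite k H H1 H2 -> x < y ->
  (forall t, x <= t <= y -> 0 < H t) -> (forall t, x <= t <= y -> uf H H1 t <= s) ->
  ln (H y) - ln (H x) <= s * (y - x).
Proof. intros hH hxy hp hs.
destruct (MVT_cor2 (fun t => ln (H t)) (uf H H1) x y hxy) as (c&hc&hc2).
intros c hc; apply (D_lnH k _ _ H2); auto.
rewrite hc. apply Rmult_le_compat_r. lra. apply hs; lra. Qed.

Lemma ratio_bounds k H H1 H2 : is_hermite k H H1 H2 -> exists M, 0 <= M /\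
  forall x N, M < x -> 1 <= N ->
   ln (1/2) - ln (3/2) + k * ln N <= ln (H (N * x)) - ln (H x) <= ln (3/2) - ln (1/2) + k * ln N.
Proof. intros hH. destruct (asym _ _ _ _ hH) as (M&hM&hA). exists M. split; auto.
intros x N hx hN. assert (N * x > M) by nra.
destruct (hA x hx) as (_&a1&a2). destruct (hA (N * x) H0) as (_&b1&b2).
rewrite ln_mult in b1, b2 by lra. lra. Qed.

Lemma C1 k H H1 H2 a c : is_hermite k H H1 H2 -> (forall t, a <= t -> 0 < H t) -> 0 < c ->
  (forall t, a <= t -> c <= uf H H1 t) -> False.
Proof. intros hH hp hc hu. destruct (ratio_bounds _ _ _ _ hH) as (M&hM&hR).
set (K := ln (3/2) - ln (1/2) + k * ln 2).
set (P := Rmax M a + 1). assert (M <= Rmax M a) by apply Rmax_l. assert (a <= Rmax M a) by apply Rmax_r.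
set (x := P + (Rabs K + 1) / c).
assert (0 <= (Rabs K + 1) / c). { apply Rlt_le, Rdiv_lt_0_compat; auto. assert (0 <= Rabs K) by apply Rabs_pos. lra. }
assert (hcx : c * x = c * P + Rabs K + 1) by (unfold x; field; lra).
assert (K <= Rabs K) by apply Rle_abs.
destruct (hR x 2 ltac:(unfold x, P in *; lra) ltac:(lra)) as (_&r2).
assert (h := growth_ge _ _ _ _ c x (2 * x) hH ltac:(unfold x, P in *; lra)
  ltac:(intros; apply hp; unfold x, P in *; lra) ltac:(intros; apply hu; unfold x, P in *; lra)).
assert (0 < c * P) by (apply Rmult_lt_0_compat; unfold P; lra).
fold K in r2. nra. Qed.

Lemma C2 k H H1 H2 a c : is_hermite k H H1 H2 -> (forall t, a <= t -> 0 < H t) -> 0 < c ->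
  (forall t, a <= t -> uf H H1 t <= - c) -> False.
Proof. intros hH hp hc hu. destruct (ratio_bounds _ _ _ _ hH) as (M&hM&hR).
set (K := ln (3/2) - ln (1/2) - k * ln 2).
set (P := Rmax M a + 1). assert (M <= Rmax M a) by apply Rmax_l. assert (a <= Rmax M a) by apply Rmax_r.
set (x := P + (Rabs K + 1) / c).
assert (0 <= (Rabs K + 1) / c). { apply Rlt_le, Rdiv_lt_0_compat; auto. assert (0 <= Rabs K) by apply Rabs_pos. lra. }
assert (hcx : c * x = c * P + Rabs K + 1) by (unfold x; field; lra).
assert (K <= Rabs K) by apply Rle_abs.
destruct (hR x 2 ltac:(unfold x, P in *; lra) ltac:(lra)) as (r1&_).
assert (h := growth_le _ _ _ _ (-c) x (2 * x) hH ltac:(unfold x, P in *; lra)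
  ltac:(intros; apply hp; unfold x, P in *; lra) ltac:(intros; apply hu; unfold x, P in *; lra)).
assert (0 < c * P) by (apply Rmult_lt_0_compat; unfold P; lra).
unfold K in *. nra. Qed.

Lemma C3 k H H1 H2 a : is_hermite k H H1 H2 -> k < 0 -> (forall t, a <= t -> 0 < H t) ->
  (forall t, a <= t -> 0 <= uf H H1 t) -> False.
Proof. intros hH hk hp hu. destruct (ratio_bounds _ _ _ _ hH) as (M&hM&hR).
set (D := ln (3/2) - ln (1/2)). assert (D <= Rabs D) by apply Rle_abs.
set (N := exp ((Rabs D + 1) / (- k))).
assert (hlnN : k * ln N = - (Rabs D + 1)) by (unfold N; rewrite ln_exp; field; lra).
assert (0 < (Rabs D + 1) / (- k)). { apply Rdiv_lt_0_compat; try lra. assert (0 <= Rabs D) by apply Rabs_pos. lra. }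
assert (1 < N). { unfold N. eapply Rlt_trans; [|apply exp_ineq1; lra]. lra. }
set (x := Rmax M a + 1). assert (M <= Rmax M a) by apply Rmax_l. assert (a <= Rmax M a) by apply Rmax_r.
destruct (hR x N ltac:(unfold x; lra) ltac:(lra)) as (_&r2).
assert (h := growth_ge _ _ _ _ 0 x (N * x) hH ltac:(unfold x in *; nra)
  ltac:(intros; apply hp; unfold x in *; lra) ltac:(intros; apply hu; unfold x in *; lra)).
fold D in r2. lra. Qed.

Lemma C4 k H H1 H2 a : is_hermite k H H1 H2 -> 0 < k -> (forall t, a <= t -> 0 < H t) ->
  (forall t, a <= t -> uf H H1 t <= 0) -> False.
Proof. intros hH hk hp hu. destruct (ratio_bounds _ _ _ _ hH) as (M&hM&hR).
set (D := ln (3/2) - ln (1/2)). assert (D <= Rabs D) by apply Rle_abs.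
set (N := exp ((Rabs D + 1) / k)).
assert (hlnN : k * ln N = (Rabs D + 1)) by (unfold N; rewrite ln_exp; field; lra).
assert (0 < (Rabs D + 1) / k). { apply Rdiv_lt_0_compat; try lra. assert (0 <= Rabs D) by apply Rabs_pos. lra. }
assert (1 < N). { unfold N. eapply Rlt_trans; [|apply exp_ineq1; lra]. lra. }
set (x := Rmax M a + 1). assert (M <= Rmax M a) by apply Rmax_l. assert (a <= Rmax M a) by apply Rmax_r.
destruct (hR x N ltac:(unfold x; lra) ltac:(lra)) as (r1&_).
assert (h := growth_le _ _ _ _ 0 x (N * x) hH ltac:(unfold x in *; nra)
  ltac:(intros; apply hp; unfold x in *; lra) ltac:(intros; apply hu; unfold x in *; lra)).
unfold D in *. lra. Qed.

Lemma W_at_zero k H H1 x : H x = 0 -> Wf k H H1 x = H1 x ^ 2.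
Proof. intros h. unfold Wf. rewrite h. ring. Qed.

Lemma zeroW k H H1 H2 x : k <> 0 -> is_hermite k H H1 H2 -> Wf k H H1 x = 0 -> H x <> 0 /\ H1 x <> 0.
Proof. intros hk hH hW. split.
- intros h0. rewrite W_at_zero in hW by auto. apply (no_double _ _ _ _ x hH h0). nra.
- intros h1. unfold Wf in hW. rewrite h1 in hW. assert (hk0 : k * H x ^ 2 = 0) by lra.
  destruct (Rmult_integral _ _ hk0) as [|h2]; auto. assert (h3 : H x = 0) by nra.
  apply (no_double _ _ _ _ x hH h3). auto. Qed.

Lemma W_neg_H k H H1 x : Wf k H H1 x < 0 -> H x <> 0.
Proof. intros h h0. rewrite W_at_zero in h by auto. nra. Qed.

Lemma u_HH1 H H1 x : H x <> 0 -> H x * H1 x = uf H H1 x * H x ^ 2.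
Proof. intros h. unfold uf. field. auto. Qed.

Lemma u_incr k H H1 H2 x y : is_hermite k H H1 H2 -> x < y ->
  (forall t, x <= t <= y -> H t <> 0) -> (forall t, x < t < y -> Wf k H H1 t < 0) ->
  uf H H1 x < uf H H1 y.
Proof. intros hH hxy hn hw.
destruct (MVT_cor2 (uf H H1) (fun t => - Wf k H H1 t / (H t)^2) x y hxy) as (c&hc&hc2).
intros c hc; apply (D_u _ _ _ H2); auto.
specialize (hw c hc2). assert (H c <> 0) by (apply hn; lra).
assert (0 < H c ^ 2) by (apply pow2_gt_0; auto).
assert (0 < - Wf k H H1 c / H c ^ 2) by (apply Rdiv_lt_0_compat; lra).
nra. Qed.

Lemma u_decr k H H1 H2 x y : is_hermite k H H1 H2 -> x < y ->
  (forall t, x <= t <= y -> H t <> 0) -> (forall t, x < t < y -> 0 < Wf k H H1 t) ->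
  uf H H1 y < uf H H1 x.
Proof. intros hH hxy hn hw.
destruct (MVT_cor2 (uf H H1) (fun t => - Wf k H H1 t / (H t)^2) x y hxy) as (c&hc&hc2).
intros c hc; apply (D_u _ _ _ H2); auto.
specialize (hw c hc2). assert (H c <> 0) by (apply hn; lra).
assert (0 < H c ^ 2) by (apply pow2_gt_0; auto).
assert (0 < Wf k H H1 c / H c ^ 2) by (apply Rdiv_lt_0_compat; lra).
assert (- Wf k H H1 c / H c ^ 2 = - (Wf k H H1 c / H c ^ 2)) by (field; auto).
nra. Qed.

Lemma pos_tail k H H1 H2 a : is_hermite k H H1 H2 -> (forall t, a <= t -> H t <> 0) ->
  forall t, a <= t -> 0 < H t.
Proof. intros hH hn t ht. destruct (asym _ _ _ _ hH) as (M&hM&hA).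
destruct (Rlt_le_dec 0 (H t)) as [|hle]; auto. exfalso.
set (y := Rmax M t + 1). assert (M <= Rmax M t) by apply Rmax_l. assert (t <= Rmax M t) by apply Rmax_r.
destruct (hA y ltac:(unfold y; lra)) as (hy&_).
destruct (IVT_cor H t y (cont_H _ _ _ _ hH) ltac:(unfold y; lra) ltac:(nra)) as (z&hz&hz0).
apply (hn z); auto; lra. Qed.

Lemma Pa k H H1 H2 x1 : k <> 0 -> is_hermite k H H1 H2 -> Wf k H H1 x1 = 0 ->
  0 < H x1 * H1 x1 -> False.
Proof. intros hk hH hW hp.
set (W := Wf k H H1).
destruct (deriv_neg W x1 _ (D_W _ _ _ H2 x1 hH)) as (d&hd&hdd). rewrite (hW : Wf k H H1 x1 = 0); lra.
set (b := x1 + d/2).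
assert (hWr : forall y, x1 < y <= b -> W y < 0).
{ intros y hy. destruct (hdd (y - x1) ltac:(unfold b in *; lra)) as (h1&_).
  replace (x1 + (y - x1)) with y in h1 by ring. unfold W in *; lra. }
assert (hx1 : H x1 <> 0) by (intro h; rewrite h in hp; lra).
assert (hu1 : 0 < uf H H1 x1). { rewrite u_HH1 in hp by auto. assert (0 < H x1 ^ 2) by (apply pow2_gt_0; auto). nra. }
destruct (classic (exists t, b < t /\ 0 <= W t)) as [[t [hbt ht]]|hno].
- destruct (first_zero W b t (cont_W _ _ _ _ hH) hbt ltac:(apply hWr; unfold b; lra) ht) as (t0&ht0&hW0&hl).
  assert (hneg : forall y, x1 < y < t0 -> W y < 0).
  { intros y hy. destruct (Rle_lt_dec y b). apply hWr; lra. apply hl; lra. }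
  assert (hnz : forall y, x1 <= y <= t0 -> H y <> 0).
  { intros y hy. destruct (Req_dec y x1) as [->|]; auto. destruct (Req_dec y t0) as [->|].
    apply (zeroW _ _ _ H2 _ hk hH hW0). apply (W_neg_H k _ H1). apply hneg; lra. }
  assert (hut := u_incr _ _ _ _ x1 t0 hH ltac:(unfold b in *; lra) hnz hneg).
  assert (hHt0 : H t0 <> 0) by (apply hnz; unfold b in *; lra).
  assert (hp0 : 0 < H t0 * H1 t0). { rewrite u_HH1 by auto. assert (0 < H t0 ^ 2) by (apply pow2_gt_0; auto). nra. }
  destruct (deriv_neg W t0 _ (D_W _ _ _ H2 t0 hH)) as (d2&hd2&hdd2). rewrite (hW0 : Wf k H H1 t0 = 0); lra.
  set (h := Rmin d2 (t0 - x1) / 2).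
  assert (0 < Rmin d2 (t0 - x1)) by (apply Rmin_pos; unfold b in *; lra).
  assert (Rmin d2 (t0 - x1) <= d2) by apply Rmin_l. assert (Rmin d2 (t0 - x1) <= t0 - x1) by apply Rmin_r.
  destruct (hdd2 h ltac:(unfold h; lra)) as (_&hh). specialize (hneg (t0 - h) ltac:(unfold h; lra)).
  fold W in hW0. lra.
- assert (hneg : forall y, x1 < y -> W y < 0).
  { intros y hy. destruct (Rle_lt_dec y b). apply hWr; lra.
    destruct (Rlt_le_dec (W y) 0); auto. exfalso; apply hno; eauto. }
  assert (hnz : forall y, x1 <= y -> H y <> 0).
  { intros y hy. destruct (Req_dec y x1) as [->|]; auto. apply (W_neg_H k _ H1). apply hneg; lra. }
  apply (C1 _ _ _ _ x1 (uf H H1 x1) hH (pos_tail _ _ _ _ x1 hH hnz) hu1).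
  intros t ht. destruct (Req_dec t x1) as [->|]. lra.
  apply Rlt_le, (u_incr _ _ _ _ x1 t hH). lra. intros; apply hnz; lra. intros; apply hneg; lra.
Qed.

Lemma Pb k H H1 H2 x1 a : k <> 0 -> is_hermite k H H1 H2 -> Wf k H H1 x1 = 0 ->
  H x1 * H1 x1 < 0 -> a < x1 -> 0 <= Wf k H H1 a -> False.
Proof. intros hk hH hW hp hax hWa.
set (W := Wf k H H1) in *.
destruct (deriv_pos W x1 _ (D_W _ _ _ H2 x1 hH)) as (d&hd&hdd). rewrite (hW : Wf k H H1 x1 = 0); lra.
assert (0 < Rmin d (x1 - a)) by (apply Rmin_pos; lra).
assert (Rmin d (x1 - a) <= d) by apply Rmin_l. assert (Rmin d (x1 - a) <= x1 - a) by apply Rmin_r.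
set (b := x1 - Rmin d (x1 - a) / 2).
assert (hWl : forall y, b <= y < x1 -> W y < 0).
{ intros y hy. destruct (hdd (x1 - y) ltac:(unfold b in *; lra)) as (_&h1).
  replace (x1 - (x1 - y)) with y in h1 by ring. unfold W in *; lra. }
destruct (last_zero W a b (cont_W _ _ _ _ hH) ltac:(unfold b; lra) hWa ltac:(apply hWl; unfold b; lra)) as (r&hr&hW0&hl).
assert (hneg : forall y, r < y < x1 -> W y < 0).
{ intros y hy. destruct (Rle_lt_dec y b). apply hl; lra. apply hWl; lra. }
assert (hnz : forall y, r <= y <= x1 -> H y <> 0).
{ intros y hy. destruct (Req_dec y x1) as [->|]. apply (zeroW _ _ _ H2 _ hk hH hW).
  destruct (Req_dec y r) as [->|]. apply (zeroW _ _ _ H2 _ hk hH hW0). apply (W_neg_H k _ H1). apply hneg; lra. }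
assert (hut := u_incr _ _ _ _ r x1 hH ltac:(unfold b in *; lra) hnz hneg).
assert (hx1 : H x1 <> 0) by (apply hnz; unfold b in *; lra).
assert (hr0 : H r <> 0) by (apply hnz; unfold b in *; lra).
assert (hu1 : uf H H1 x1 < 0). { rewrite u_HH1 in hp by auto. assert (0 < H x1 ^ 2) by (apply pow2_gt_0; auto). nra. }
assert (hpr : H r * H1 r < 0). { rewrite u_HH1 by auto. assert (0 < H r ^ 2) by (apply pow2_gt_0; auto). nra. }
destruct (deriv_pos W r _ (D_W _ _ _ H2 r hH)) as (d2&hd2&hdd2). rewrite (hW0 : Wf k H H1 r = 0); lra.
assert (0 < Rmin d2 (x1 - r)) by (apply Rmin_pos; unfold b in *; lra).
assert (Rmin d2 (x1 - r) <= d2) by apply Rmin_l. assert (Rmin d2 (x1 - r) <= x1 - r) by apply Rmin_r.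
set (h := Rmin d2 (x1 - r) / 2).
destruct (hdd2 h ltac:(unfold h; lra)) as (hh&_). specialize (hneg (r + h) ltac:(unfold h; lra)).
lra.
Qed.

Lemma Pc k H H1 H2 x1 : k <> 0 -> is_hermite k H H1 H2 -> Wf k H H1 x1 = 0 ->
  H x1 * H1 x1 < 0 -> (forall t, x1 <= t -> H t <> 0) -> False.
Proof. intros hk hH hW hp hnz.
set (W := Wf k H H1) in *.
destruct (deriv_pos W x1 _ (D_W _ _ _ H2 x1 hH)) as (d&hd&hdd). rewrite (hW : Wf k H H1 x1 = 0); lra.
set (b := x1 + d/2).
assert (hWr : forall y, x1 < y <= b -> 0 < W y).
{ intros y hy. destruct (hdd (y - x1) ltac:(unfold b in *; lra)) as (h1&_).
  replace (x1 + (y - x1)) with y in h1 by ring. unfold W in *; lra. }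
assert (hx1 : H x1 <> 0) by (apply hnz; lra).
assert (hu1 : uf H H1 x1 < 0). { rewrite u_HH1 in hp by auto. assert (0 < H x1 ^ 2) by (apply pow2_gt_0; auto). nra. }
destruct (classic (exists t, b < t /\ W t <= 0)) as [[t [hbt ht]]|hno].
- destruct (first_zero' W b t (cont_W _ _ _ _ hH) hbt ltac:(apply hWr; unfold b; lra) ht) as (t0&ht0&hW0&hl).
  assert (hpos : forall y, x1 < y < t0 -> 0 < W y).
  { intros y hy. destruct (Rle_lt_dec y b). apply hWr; lra. apply hl; lra. }
  assert (hut := u_decr _ _ _ _ x1 t0 hH ltac:(unfold b in *; lra) ltac:(intros; apply hnz; lra) hpos).
  assert (hHt0 : H t0 <> 0) by (apply hnz; unfold b in *; lra).
  assert (hp0 : H t0 * H1 t0 < 0). { rewrite u_HH1 by auto. assert (0 < H t0 ^ 2) by (apply pow2_gt_0; auto). nra. }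
  destruct (deriv_pos W t0 _ (D_W _ _ _ H2 t0 hH)) as (d2&hd2&hdd2). rewrite (hW0 : Wf k H H1 t0 = 0); lra.
  assert (0 < Rmin d2 (t0 - x1)) by (apply Rmin_pos; unfold b in *; lra).
  assert (Rmin d2 (t0 - x1) <= d2) by apply Rmin_l. assert (Rmin d2 (t0 - x1) <= t0 - x1) by apply Rmin_r.
  set (h := Rmin d2 (t0 - x1) / 2).
  destruct (hdd2 h ltac:(unfold h; lra)) as (_&hh). specialize (hpos (t0 - h) ltac:(unfold h; lra)).
  lra.
- assert (hpos : forall y, x1 < y -> 0 < W y).
  { intros y hy. destruct (Rle_lt_dec y b). apply hWr; lra.
    destruct (Rlt_le_dec 0 (W y)); auto. exfalso; apply hno; eauto. }
  apply (C2 _ _ _ _ x1 (- uf H H1 x1) hH (pos_tail _ _ _ _ x1 hH hnz)). lra.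
  intros t ht. destruct (Req_dec t x1) as [->|]. lra.
  apply Rlt_le. rewrite Ropp_involutive. apply (u_decr _ _ _ _ x1 t hH). lra. intros; apply hnz; lra. intros; apply hpos; lra.
Qed.

Lemma Wzero_contra k H H1 H2 x : k <> 0 -> is_hermite k H H1 H2 -> Wf k H H1 x = 0 ->
  (forall t, x <= t -> H t <> 0) -> False.
Proof. intros hk hH hW hn. destruct (zeroW _ _ _ H2 _ hk hH hW) as (h1&h2).
destruct (Rtotal_order (H x * H1 x) 0) as [h|[h|h]].
- apply (Pc _ _ _ _ x hk hH hW h hn).
- destruct (Rmult_integral _ _ h); auto.
- apply (Pa _ _ _ _ x hk hH hW h). Qed.

Lemma Wpos_tail_neg k H H1 H2 a : k < 0 -> is_hermite k H H1 H2 ->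
  (forall t, a <= t -> H t <> 0) -> (forall y, a < y -> 0 < Wf k H H1 y) -> False.
Proof. intros hk hH hn hp.
destruct (classic (exists y, a < y /\ uf H H1 y < 0)) as [[y0 [hy0 hu0]]|hno].
- apply (C2 _ _ _ _ y0 (- uf H H1 y0) hH). intros; apply (pos_tail _ _ _ _ a hH hn); lra. lra.
  intros t ht. destruct (Req_dec t y0) as [->|]. lra.
  apply Rlt_le. rewrite Ropp_involutive. apply (u_decr _ _ _ _ y0 t hH). lra. intros; apply hn; lra. intros; apply hp; lra.
- apply (C3 _ _ _ _ (a + 1) hH hk). intros; apply (pos_tail _ _ _ _ a hH hn); lra.
  intros t ht. destruct (Rle_lt_dec 0 (uf H H1 t)); auto. exfalso; apply hno. exists t; split; auto; lra.
Qed.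

Lemma zeros_bounded_above k H H1 H2 : is_hermite k H H1 H2 -> exists M, forall x, H x = 0 -> x <= M.
Proof. intros hH. destruct (asym _ _ _ _ hH) as (M&hM&hA). exists M. intros x hx.
destruct (Rle_lt_dec x M); auto. destruct (hA x r) as (h&_). lra. Qed.

Lemma neg_nozero k H H1 H2 : k < 0 -> is_hermite k H H1 H2 -> forall x, H x <> 0.
Proof. intros hk hH x0 hx0. assert (hk0 : k <> 0) by lra.
destruct (zeros_bounded_above _ _ _ _ hH) as (M&hM).
destruct (sup_zero H M (cont_H _ _ _ _ hH) (ex_intro _ x0 hx0) hM) as (z&hz&hzz).
assert (hn : forall t, z < t -> H t <> 0). { intros t ht h. specialize (hzz t h). lra. }
assert (hWz : 0 < Wf k H H1 z). { rewrite W_at_zero by auto. assert (H1 z <> 0) by (apply (no_double _ _ _ _ z hH hz)). apply pow2_gt_0; auto. }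
destruct (classic (exists x1, z < x1 /\ Wf k H H1 x1 <= 0)) as [[x1 [hx1 hW1]]|hno].
- destruct (IVT_cor (Wf k H H1) z x1 (cont_W _ _ _ _ hH) ltac:(lra) ltac:(nra)) as (x2&hx2&hW2).
  assert (x2 <> z) by (intro e; subst; lra).
  apply (Wzero_contra _ _ _ _ x2 hk0 hH hW2). intros; apply hn; lra.
- apply (Wpos_tail_neg _ _ _ _ (z + 1) hk hH). intros; apply hn; lra.
  intros y hy. destruct (Rlt_le_dec 0 (Wf k H H1 y)); auto. exfalso; apply hno; exists y; split; auto; lra.
Qed.

Lemma neg_Wneg k H H1 H2 : k < 0 -> is_hermite k H H1 H2 -> forall x, Wf k H H1 x < 0.
Proof. intros hk hH x0. assert (hk0 : k <> 0) by lra.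
assert (hn := neg_nozero _ _ _ _ hk hH).
destruct (Rlt_le_dec (Wf k H H1 x0) 0) as [|hge]; auto. exfalso.
destruct (classic (exists x2, x0 <= x2 /\ Wf k H H1 x2 = 0)) as [[x2 [hx2 hW2]]|hno].
- apply (Wzero_contra _ _ _ _ x2 hk0 hH hW2). intros; apply hn.
- apply (Wpos_tail_neg _ _ _ _ x0 hk hH). intros; apply hn.
  intros y hy. destruct (Rlt_le_dec 0 (Wf k H H1 y)) as [|hle]; auto. exfalso.
  destruct (IVT_cor (Wf k H H1) x0 y (cont_W _ _ _ _ hH) ltac:(lra) ltac:(nra)) as (x2&hx2&hW2).
  apply hno; exists x2; split; [lra|auto].
Qed.

Lemma neg_u k H H1 H2 : k < 0 -> is_hermite k H H1 H2 -> forall q, uf H H1 q < 0.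
Proof. intros hk hH q. assert (hn := neg_nozero _ _ _ _ hk hH). assert (hw := neg_Wneg _ _ _ _ hk hH).
destruct (Rlt_le_dec (uf H H1 q) 0) as [|hge]; auto. exfalso.
apply (C3 _ _ _ _ q hH hk). intros; apply (pos_tail _ _ _ _ q hH); auto.
intros t ht. destruct (Req_dec t q) as [->|]; auto.
apply Rlt_le. eapply Rle_lt_trans. apply hge. apply (u_incr _ _ _ _ q t hH). lra. auto. auto.
Qed.

Lemma D_v k H H1 H2 x : is_hermite k H H1 H2 -> H1 x <> 0 ->
  derivable_pt_lim (fun t => H t / H1 t) x (Wf k H H1 x / (H1 x)^2).
Proof. intros hH hx. apply is_derive_Reals. unfold Wf. hder hH. field. auto. Qed.

Lemma pos_zero_exists k H H1 H2 : 0 < k -> is_hermite k H H1 H2 -> exists z, H z = 0.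
Proof. intros hk hH. assert (hk0 : k <> 0) by lra.
apply NNPP. intros hno. assert (hn : forall x, H x <> 0) by (intros x hx; apply hno; eauto).
assert (hp : forall x, 0 < H x) by (intros x; apply (pos_tail _ _ _ _ x hH); [intros; auto | lra]).
assert (hWn : forall x, Wf k H H1 x <> 0) by (intros x hW; apply (Wzero_contra _ _ _ _ x hk0 hH hW); auto).
destruct (classic (exists y, Wf k H H1 y < 0)) as [[y hy]|hno2].
- assert (hw : forall x, Wf k H H1 x < 0).
  { intros x. destruct (Rlt_le_dec (Wf k H H1 x) 0) as [|hle]; auto. exfalso.
    destruct (Rle_lt_dec y x).
    + destruct (IVT_cor (Wf k H H1) y x (cont_W _ _ _ _ hH) r ltac:(nra)) as (z&_&hz). apply (hWn z hz).
    + destruct (IVT_cor (Wf k H H1) x y (cont_W _ _ _ _ hH) ltac:(lra) ltac:(nra)) as (z&_&hz). apply (hWn z hz). }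
  destruct (classic (exists a, 0 < uf H H1 a)) as [[a ha]|hno3].
  + apply (C1 _ _ _ _ a (uf H H1 a) hH). intros; auto. auto.
    intros t ht. destruct (Req_dec t a) as [->|]. lra. apply Rlt_le, (u_incr _ _ _ _ a t hH). lra. auto. auto.
  + apply (C4 _ _ _ _ 0 hH hk). intros; auto. intros t _. destruct (Rle_lt_dec (uf H H1 t) 0); auto.
    exfalso; eauto.
- assert (hw : forall x, 0 < Wf k H H1 x).
  { intros x. destruct (Rlt_le_dec 0 (Wf k H H1 x)) as [|hle]; auto. exfalso.
    destruct (Req_dec (Wf k H H1 x) 0). apply (hWn x); auto. apply hno2; exists x; lra. }
  destruct (classic (exists a, uf H H1 a < 0)) as [[a ha]|hno3].
  + apply (C2 _ _ _ _ a (- uf H H1 a) hH). intros; auto. lra.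
    intros t ht. rewrite Ropp_involutive. destruct (Req_dec t a) as [->|]. lra. apply Rlt_le, (u_decr _ _ _ _ a t hH). lra. auto. auto.
  + assert (hu : forall x, 0 < uf H H1 x).
    { intros x. assert (0 <= uf H H1 (x + 1)). { destruct (Rle_lt_dec 0 (uf H H1 (x+1))); auto. exfalso; eauto. }
      assert (uf H H1 (x + 1) < uf H H1 x) by (apply (u_decr _ _ _ _ x (x+1) hH); auto; lra). lra. }
    assert (hH1 : forall x, H1 x <> 0). { intros x h. specialize (hu x). unfold uf in hu. rewrite h in hu. unfold Rdiv in hu. lra. }
    assert (hH1p : forall x, 0 < H1 x).
    { intros x. specialize (hu x). specialize (hp x).
      assert (H1 x = uf H H1 x * H x) by (unfold uf; field; lra). nra. }
    assert (hv : forall x, 0 < H x / H1 x) by (intros x; apply Rdiv_lt_0_compat; auto).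
    set (x0 := - (H 0 / H1 0) - 1).
    assert (hx0 : x0 < 0) by (unfold x0; specialize (hv 0); lra).
    destruct (MVT_cor2 (fun t => H t / H1 t) (fun t => Wf k H H1 t / (H1 t)^2) x0 0 hx0) as (c&hc&hc2).
    { intros c _. apply (D_v _ _ _ H2); auto. }
    assert (hgt : 1 < Wf k H H1 c / H1 c ^ 2).
    { assert (0 < H1 c ^ 2) by (apply pow2_gt_0; auto).
      assert (Wf k H H1 c - H1 c ^ 2 > 0).
      { unfold Wf. specialize (hp c). specialize (hH1p c). assert (0 < - c * H c * H1 c).
        apply Rmult_lt_0_compat; [apply Rmult_lt_0_compat|]; lra. nra. }
      apply (Rmult_lt_reg_r (H1 c ^ 2)); auto. unfold Rdiv. rewrite Rmult_assoc, Rinv_l by lra. lra. }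
    specialize (hv x0). cbv beta in hc.
    set (r := Wf k H H1 c / H1 c ^ 2) in *.
    assert (r * (0 - x0) > 1 * (0 - x0)) by (apply Rmult_lt_compat_r; lra).
    assert (hx0e : x0 = - (H 0 / H1 0) - 1) by reflexivity.
    lra.
Qed.

Lemma D_P k H H1 H2 x : is_hermite k H H1 H2 ->
  derivable_pt_lim (fun t => exp (- (t * t) / 2) * (H t * H1 t - t * H t ^ 2 / 2)) x
    (exp (- (x * x) / 2) * ((H1 x - x * H x / 2) ^ 2 + (x ^ 2 / 4 - k - 1/2) * H x ^ 2)).
Proof. intros hH. apply is_derive_Reals. hder hH. replace (- (x * x) * / 2) with (- (x * x) / 2) by (unfold Rdiv; ring). field. Qed.

Lemma two_zeros k H H1 H2 z1 z2 : 0 < k -> is_hermite k H H1 H2 -> z1 < z2 -> z2 < - (2 * k + 2) ->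
  H z1 = 0 -> H z2 = 0 -> False.
Proof. intros hk hH h12 h2 hz1 hz2.
destruct (MVT_cor2 _ _ z1 z2 h12 (fun c _ => D_P _ _ _ H2 c hH)) as (c&hc&hc2).
rewrite hz1, hz2 in hc.
assert (hq : 0 < c ^ 2 / 4 - k - 1/2) by nra.
assert (0 < exp (- (c * c) / 2)) by apply exp_pos.
set (S := (H1 c - c * H c / 2) ^ 2 + (c ^ 2 / 4 - k - 1 / 2) * H c ^ 2) in *.
assert (S = 0).
{ assert (hz : exp (- (c * c) / 2) * S * (z2 - z1) = 0) by lra.
  destruct (Rmult_integral _ _ hz) as [h|h]; [|lra].
  destruct (Rmult_integral _ _ h); lra. }
assert (0 <= (H1 c - c * H c / 2) ^ 2) by apply pow2_ge_0.
assert (0 <= H c ^ 2) by apply pow2_ge_0.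
assert (hS0 : S = 0) by auto. unfold S in hS0.
assert (0 <= (c ^ 2 / 4 - k - 1 / 2) * H c ^ 2) by (apply Rmult_le_pos; lra).
assert (hb : H c * H c = 0) by nra.
assert (hHc : H c = 0) by (destruct (Rmult_integral _ _ hb); auto).
rewrite hHc in hS0.
assert (ha : (H1 c - c * 0 / 2) * (H1 c - c * 0 / 2) = 0) by nra.
assert (H1 c = 0) by (destruct (Rmult_integral _ _ ha); lra).
apply (no_double _ _ _ _ c hH hHc); auto.
Qed.

Lemma zeros_bounded_below k H H1 H2 : 0 < k -> is_hermite k H H1 H2 ->
  exists B, forall z, H z = 0 -> B <= z.
Proof. intros hk hH.
destruct (classic (exists zs, H zs = 0 /\ zs < - (2 * k + 2))) as [[zs [hzs hzs2]]|hno].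
- exists zs. intros z hz. destruct (Rle_lt_dec zs z); auto. exfalso.
  apply (two_zeros _ _ _ _ z zs hk hH); auto.
- exists (- (2 * k + 2)). intros z hz. destruct (Rle_lt_dec (- (2 * k + 2)) z); auto. exfalso; eauto.
Qed.

Lemma pos_W k H H1 H2 z0 : 0 < k -> is_hermite k H H1 H2 -> H z0 = 0 ->
  forall x, z0 <= x -> 0 < Wf k H H1 x.
Proof. intros hk hH hz0 x hx. assert (hk0 : k <> 0) by lra.
assert (hWz : 0 < Wf k H H1 z0). { rewrite W_at_zero by auto. assert (H1 z0 <> 0) by (apply (no_double _ _ _ _ z0 hH hz0)). apply pow2_gt_0; auto. }
destruct (Rlt_le_dec 0 (Wf k H H1 x)) as [|hle]; auto. exfalso.
destruct (IVT_cor (Wf k H H1) z0 x (cont_W _ _ _ _ hH) hx ltac:(nra)) as (x2&hx2&hW2).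
assert (x2 <> z0) by (intro e; subst; lra).
destruct (zeroW _ _ _ H2 _ hk0 hH hW2) as (h1&h2).
destruct (Rtotal_order (H x2 * H1 x2) 0) as [h|[h|h]].
- apply (Pb _ _ _ _ x2 z0 hk0 hH hW2 h); lra.
- destruct (Rmult_integral _ _ h); auto.
- apply (Pa _ _ _ _ x2 hk0 hH hW2 h).
Qed.

Lemma pos_gtR k H H1 H2 Rz : 0 < k -> is_hermite k H H1 H2 -> is_rightmost_zero H Rz ->
  (forall q, Rz < q -> 0 < H q) /\ (forall q, Rz < q -> 0 < uf H H1 q) /\
  (forall p q, Rz < p -> p < q -> uf H H1 q < uf H H1 p).
Proof. intros hk hH [hR0 hRm].
assert (hn : forall t, Rz < t -> H t <> 0) by (intros t ht h; specialize (hRm t h); lra).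
assert (hp : forall t, Rz < t -> 0 < H t).
{ intros t ht. apply (pos_tail _ _ _ _ t hH). intros; apply hn; lra. lra. }
assert (hW := pos_W _ _ _ _ Rz hk hH hR0).
assert (hdec : forall p q, Rz < p -> p < q -> uf H H1 q < uf H H1 p).
{ intros p q hp1 hpq. apply (u_decr _ _ _ _ p q hH hpq). intros; apply hn; lra. intros; apply hW; lra. }
split; auto. split; auto.
intros q hq. destruct (Rlt_le_dec 0 (uf H H1 q)) as [|hle]; auto. exfalso.
assert (h1 : uf H H1 (q + 1) < uf H H1 q) by (apply hdec; lra).
apply (C2 _ _ _ _ (q + 1) (- uf H H1 (q + 1)) hH). intros; apply hp; lra. lra.
intros t ht. rewrite Ropp_involutive. destruct (Req_dec t (q + 1)) as [->|]. lra.
apply Rlt_le, hdec; lra.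
Qed.

Lemma sgn_pos x : 0 < x -> sgn x = 1.
Proof. intros h. unfold sgn. destruct (Rlt_dec 0 x); [auto|lra]. Qed.
Lemma sgn_neg x : x < 0 -> sgn x = -1.
Proof. intros h. unfold sgn. destruct (Rlt_dec 0 x); [lra|]. destruct (Rlt_dec x 0); [auto|lra]. Qed.

Theorem corollary3 (k : R) (H H1 H2 : R -> R) :
  k <> 0 ->
  is_hermite k H H1 H2 ->
  (0 < k -> (exists L, is_leftmost_zero H L) /\ (exists Rz, is_rightmost_zero H Rz)) /\
  (forall x, ge_L k H x ->
     sgn (H1 x ^ 2 - H x * H2 x) = sgn k) /\
  (forall q, gt_R k H q ->
     0 < sgn k * (H1 q / H q) /\ sgn k * (H1 q / H q) = Rabs (H1 q / H q)) /\
  (forall p q, gt_R k H p -> gt_R k H q -> p < q ->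
     sgn k * (H1 q / H q) < sgn k * (H1 p / H p)).
Proof.
intros hk hH.
destruct (Rtotal_order k 0) as [hneg|[h0|hpos]]; [|lra|].
- rewrite (sgn_neg k hneg).
  assert (hn := neg_nozero _ _ _ _ hneg hH). assert (hw := neg_Wneg _ _ _ _ hneg hH).
  assert (hu := neg_u _ _ _ _ hneg hH).
  split; [intros; lra|]. split.
  { intros x _. rewrite (W_eq _ _ _ _ x hH). apply sgn_neg, hw. }
  split.
  { intros q _. change (H1 q / H q) with (uf H H1 q). specialize (hu q). split. lra.
    rewrite Rabs_left; lra. }
  intros p q _ _ hpq. change (H1 q / H q) with (uf H H1 q). change (H1 p / H p) with (uf H H1 p).
  assert (uf H H1 p < uf H H1 q) by (apply (u_incr _ _ _ _ p q hH hpq); auto).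
  lra.
- rewrite (sgn_pos k hpos).
  split.
  { intros _. destruct (pos_zero_exists _ _ _ _ hpos hH) as (z0&hz0). split.
    - destruct (zeros_bounded_below _ _ _ _ hpos hH) as (B&hB).
      destruct (inf_zero H B (cont_H _ _ _ _ hH) (ex_intro _ z0 hz0) hB) as (L&hL&hLm).
      exists L. split; auto.
    - destruct (zeros_bounded_above _ _ _ _ hH) as (B&hB).
      destruct (sup_zero H B (cont_H _ _ _ _ hH) (ex_intro _ z0 hz0) hB) as (R&hR&hRm).
      exists R. split; auto. }
  split.
  { intros x [hle|[L [[hL0 _] hLx]]]. lra.
    rewrite (W_eq _ _ _ _ x hH). apply sgn_pos. apply (pos_W _ _ _ _ L hpos hH hL0); auto. }
  split.
  { intros q [hle|[Rz [hR hRq]]]. lra.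
    destruct (pos_gtR _ _ _ _ Rz hpos hH hR) as (_&hu&_).
    change (H1 q / H q) with (uf H H1 q). specialize (hu q hRq). split. lra.
    rewrite Rabs_right; lra. }
  intros p q [hle|[R1 [hR1 hp1]]] [hle'|[R2 [hR2 hq2]]] hpq; try lra.
  destruct (pos_gtR _ _ _ _ R1 hpos hH hR1) as (_&_&hd).
  change (H1 q / H q) with (uf H H1 q). change (H1 p / H p) with (uf H H1 p).
  assert (uf H H1 q < uf H H1 p) by (apply hd; auto). lra.
Qed.
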